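(* In every $\mathcal L$-model: (1) for every program $A\in\mathcal L_a$, $\to_A=\bigcup_{B\in\mathcal L(A)}\to_B$; (2) for any two interchangeable words $A,B\in(\mathrm{AtP}_\Omega\cup\mathcal L_s)^*$, $\to_A=\to_B$.
   Context: $\tau$PDL syntax: formulas $\mathcal L_s$: $\varphi::=p\mid\neg\varphi\mid\forall A.\varphi\mid\mathsf C_\imath A$; programs $\mathcal L_a$: $A::=a\mid\varphi\mid\varphi\Rightarrow\varphi\mid AA\mid A+A\mid A^*$ ($a\in\mathrm{AtP}$, atomic programs), interpreted in $\mathcal L$-models by the standard relational semantics of $\tau$PDL: $\to_\varphi=\{(w,w):w\models\varphi\}$, $\to_{AB}=\to_A\circ\to_B$, $\to_{A+B}=\to_A\cup\to_B$, $\to_{A^*}=\bigcup_{n\ge0}(\to_A)^n$, $\to_{\varphi\Rightarrow\psi}=\bigcup\{\to_C: C\in\Sigma^+,\ \forall w\models\varphi\,\forall w'(w\to_Cw'\Rightarrow w'\models\psi)\}$ with $\Sigma^+$ the finite nonempty compositions of atomic programs, tests and $\Rightarrow$-terms. $\Omega:=\mathsf{tt}\Rightarrow\mathsf{tt}$ ($\mathsf{tt}$ a tautology), $\mathrm{AtP}_\Omega=\mathrm{AtP}\cup\{\Omega\}$. The language $\mathcal L(A)$ of a program (a set of words over the alphabet $\mathrm{AtP}_\Omega\cup\mathcal L_s$) is defined by $\mathcal L(a)=\{a\}$, $\mathcal L(\varphi)=\{\varphi\}$, $\mathcal L(\Omega)=\{\Omega\}$, $\mathcal L(\varphi\Rightarrow\psi)=\mathcal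 L((\neg\varphi)\Omega+\Omega\psi)$, $\mathcal L(A+B)=\mathcal L(A)\cup\mathcal L(B)$, $\mathcal L(AB)=\mathcal L(A)\mathcal L(B)$, $\mathcal L(A^* )=\mathcal L(A)^*$ (usual concatenation and Kleene star, $\varepsilon$ the empty word). A word $A_1\cdots A_n$ denotes the composed relation $\to_{A_1}\circ\cdots\circ\to_{A_n}$, the empty word denoting the identity. Two nonempty words $A=A_1\cdots A_k$ and $B=B_1\cdots B_n$, each written as blocks that are either single letters of $\mathrm{AtP}_\Omega$ or maximal consecutive runs of formulas, are interchangeable iff $A=B$, or $k=n$ and for each $i$: if $A_i\in\mathrm{AtP}_\Omega$ then $B_i=A_i$, and if $A_i=\varphi_1\cdots\varphi_r$ is a run of formulas then $B_i=\psi_1\cdots\psi_l$ is a run of formulas with $\bigwedge_j\psi_j$ semantically equivalent to $\bigwedge_j\varphi_j$. *)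

(* Defs.v *)
From Stdlib Require Import List.
Import ListNotations.
Set Implicit Arguments.

Section TauPDL.
Variables (PV Idx AtP : Type).

Inductive form : Type :=
  | Var : PV -> form
  | Not : form -> form
  | Box : prog -> form -> form
  | Cst : Idx -> prog -> form
with prog : Type :=
  | Atom : AtP -> prog
  | Test : form -> prog
  | Imp : form -> form -> prog
  | Seq : prog -> prog -> prog
  | Cho : prog -> prog -> prog
  | Star : prog -> prog.

Inductive sigmaP : prog -> Prop :=
  | sigma_atom a : sigmaP (Atom a)
  | sigma_test f : sigmaP (Test f)
  | sigma_imp f g : sigmaP (Imp f g)
  | sigma_seq C D : sigmaP C -> sigmaP D -> sigmaP (Seq C D).

Fixpoint relpow {W : Type} (r : W -> W -> Prop) (n : nat) : W -> W -> Prop :=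
  match n with
  | O => fun w w' => w = w'
  | S k => fun w w' => exists v, r w v /\ relpow r k v w'
  end.

(* Atomic programs are arbitrary;
   the clause for C_i A is left unconstrained (it plays no role here). *)
Record model : Type := Model {
  W : Type;
  val : PV -> W -> Prop;
  rel : prog -> W -> W -> Prop;
  sat : form -> W -> Prop;
  sat_var : forall p w, sat (Var p) w <-> val p w;
  sat_not : forall f w, sat (Not f) w <-> ~ sat f w;
  sat_box : forall A f w, sat (Box A f) w <-> (forall w', rel A w w' -> sat f w');
  rel_test : forall f w w', rel (Test f) w w' <-> (w = w' /\ sat f w);
  rel_seq : forall A B w w', rel (Seq A B) w w' <-> exists v, rel A w v /\ rel B v w';
  rel_cho : forall A B w w', rel (Cho A B) w w' <-> (rel A w w' \/ rel B w w');
  rel_star : forall A w w', rel (Star A) w w' <-> exists n, relpow (rel A) n w w';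
  rel_imp : forall f g w w', rel (Imp f g) w w' <->
      exists C, sigmaP C /\
        (forall u u', sat f u -> rel C u u' -> sat g u') /\ rel C w w'
}.

Definition tautology (f : form) : Prop := forall (M : model) (w : W M), sat M f w.

Inductive letter : Type :=
  | LAt : AtP -> letter
  | LOm : letter
  | LForm : form -> letter.

Definition word := list letter.

Inductive kstar (L : word -> Prop) : word -> Prop :=
  | kstar_nil : kstar L []
  | kstar_app u v : L u -> kstar L v -> kstar L (u ++ v).

(* Language of a program; tt is the tautology used in Omega := tt => tt *)
Fixpoint lang (tt : form) (A : prog) : word -> Prop :=
  match A with
  | Atom a => fun u => u = [LAt a]
  | Test f => fun u => u = [LForm f]
  | Imp f g => fun u =>
      (f = tt /\ g = tt /\ u = [LOm]) \/
      (~ (f = tt /\ g = tt) /\ (u = [LForm (Not f); LOm] \/ u = [LOm; LForm g]))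
  | Seq A B => fun u => exists u1 u2, u = u1 ++ u2 /\ lang tt A u1 /\ lang tt B u2
  | Cho A B => fun u => lang tt A u \/ lang tt B u
  | Star A => kstar (lang tt A)
  end.

Definition lrel (tt : form) (M : model) (l : letter) : W M -> W M -> Prop :=
  match l with
  | LAt a => rel M (Atom a)
  | LOm => rel M (Imp tt tt)
  | LForm f => rel M (Test f)
  end.

Fixpoint wrel (tt : form) (M : model) (u : word) : W M -> W M -> Prop :=
  match u with
  | [] => fun w w' => w = w'
  | l :: u' => fun w w' => exists v, lrel tt M l w v /\ wrel tt M u' v w'
  end.

Inductive block : Type :=
  | BAt : AtP -> block
  | BOm : block
  | BForms : list form -> block.

Fixpoint blocks (u : word) : list block :=
  match u with
  | [] => []
  | LAt a :: u' => BAt a :: blocks u'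
  | LOm :: u' => BOm :: blocks u'
  | LForm f :: u' =>
      match blocks u' with
      | BForms fs :: bs => BForms (f :: fs) :: bs
      | bs => BForms [f] :: bs
      end
  end.

Definition conj_equiv (fs gs : list form) : Prop :=
  forall (M : model) (w : W M),
    (forall f, In f fs -> sat M f w) <-> (forall g, In g gs -> sat M g w).

Definition block_match (b c : block) : Prop :=
  match b, c with
  | BAt a, BAt a' => a = a'
  | BOm, BOm => True
  | BForms fs, BForms gs => conj_equiv fs gs
  | _, _ => False
  end.

Definition interchangeable (u v : word) : Prop :=
  u = v \/ (u <> [] /\ v <> [] /\ Forall2 block_match (blocks u) (blocks v)).

End TauPDL.

(* Main.v *)
Require Import Defs.
From Stdlib Require Import List Classical.
Import ListNotations.

Section S.
Variables (PV Idx AtP : Type).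
Variable (tt : form PV Idx AtP).
Variable (M : model PV Idx AtP).

Lemma wrel_app (u1 u2 : word PV Idx AtP) w w' :
  wrel tt M (u1 ++ u2) w w' <-> exists v, wrel tt M u1 w v /\ wrel tt M u2 v w'.
Proof.
  revert w; induction u1 as [|l u1 IH]; intro w; simpl.
  - split; [intro H; exists w; auto | intros [v [-> H]]; auto].
  - split.
    + intros [v [H1 H2]]. apply IH in H2. destruct H2 as [v' [H2 H3]].
      exists v'; split; [exists v; auto|auto].
    + intros [v' [[v [H1 H2]] H3]]. exists v; split; auto. apply IH; eauto.
Qed.

Fixpoint bsrel (bs : list (block PV Idx AtP)) : W M -> W M -> Prop :=
  match bs with
  | [] => fun w w' => w = w'
  | b :: bs' => fun w w' => exists v,
      (match b with
       | @BAt _ _ _ a => rel M (Atom _ _ a)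
       | @BOm _ _ _ => rel M (Imp tt tt)
       | @BForms _ _ _ fs => fun w v => w = v /\ forall f, In f fs -> sat M f w
       end) w v /\ bsrel bs' v w'
  end.

Lemma wrel_blocks (u : word PV Idx AtP) w w' :
  wrel tt M u w w' <-> bsrel (blocks u) w w'.
Proof.
  revert w; induction u as [|l u IH]; intro w; simpl; [tauto|].
  destruct l as [a| |f]; simpl.
  - split; intros [v [H1 H2]]; exists v; split; auto; apply IH; auto.
  - split; intros [v [H1 H2]]; exists v; split; auto; apply IH; auto.
  - assert (E : (exists v, lrel tt M (LForm f) w v /\ wrel tt M u v w') <->
              (sat M f w /\ bsrel (blocks u) w w')).
    { simpl. split.
      - intros [v [H1 H2]]. apply rel_test in H1. destruct H1 as [<- Hs].
        split; auto. apply IH; auto.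
      - intros [Hs H]. exists w. split; [apply rel_test; auto| apply IH; auto]. }
    simpl in E. rewrite E. clear E IH.
    destruct (blocks u) as [|b bs] eqn:Hb; simpl.
    + split.
      * intros [Hs <-]. exists w. split; auto. split; auto. intros g [<-|[]]; auto.
      * intros [v [[<- H] <-]]. split; auto.
    + destruct b as [a| |fs]; simpl.
      * split.
        -- intros [Hs H]. exists w. split; auto. split; auto. intros g [<-|[]]; auto.
        -- intros [v [[<- H] H2]]. split; auto.
      * split.
        -- intros [Hs H]. exists w. split; auto. split; auto. intros g [<-|[]]; auto.
        -- intros [v [[<- H] H2]]. split; auto.
      * split.
        -- intros [Hs [v [[<- H1] H2]]]. exists w. split; auto. split; auto.
           intros g [<-|Hg]; auto.
        -- intros [v [[<- H1] H2]]. split; [apply H1; left; auto|].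
           exists w; split; auto; try split; auto; intros g Hg; apply H1; right; auto.
Qed.

Lemma bsrel_match (bs cs : list (block PV Idx AtP)) :
  Forall2 (@block_match PV Idx AtP) bs cs -> forall w w', bsrel bs w w' <-> bsrel cs w w'.
Proof.
  induction 1 as [|b c bs cs Hbc H IH]; intros w w'; simpl; [tauto|].
  split; intros [v [H1 H2]]; exists v; (split; [|apply IH; auto]);
  destruct b, c; simpl in Hbc; try contradiction; subst; auto;
  destruct H1 as [<- H1]; split; auto; apply Hbc; auto.
Qed.

Lemma part1 (Htt : tautology tt) (A : prog PV Idx AtP) :
  forall (w w' : W M), rel M A w w' <-> exists B, lang tt A B /\ wrel tt M B w w'.
Proof.
  induction A as [a|f|f g|A IHA B IHB|A IHA B IHB|A IHA]; intros w w'; simpl.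
  - split.
    + intro H. exists [LAt _ _ a]. split; auto. simpl. exists w'; auto.
    + intros [u [-> [v [H ->]]]]. exact H.
  - split.
    + intro H. exists [LForm f]. split; auto. simpl. exists w'; auto.
    + intros [u [-> [v [H ->]]]]. exact H.
  - destruct (classic (f = tt /\ g = tt)) as [[-> ->]|Hn].
    + split.
      * intro H. exists [@LOm _ _ _]. split; [left; auto|]. simpl. exists w'; auto.
      * intros [u [[[_ [_ ->]]|[Hn _]] H]]; [|exfalso; tauto].
        destruct H as [v [H ->]]; exact H.
    + assert (Hom : forall C x y, sigmaP C -> rel M C x y -> rel M (Imp tt tt) x y).
      { intros C x y HC Hr. apply rel_imp. exists C. split; [auto|split; [|auto]].
        intros; apply Htt. }
      split.
      * intro H. apply rel_imp in H. destruct H as [C [HC [Hv Hr]]].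
        destruct (classic (sat M f w)) as [Hf|Hf].
        -- exists [@LOm _ _ _; LForm g]. split; [right; split; auto|].
           simpl. exists w'. split; [eapply Hom; eauto|].
           exists w'. split; auto. apply rel_test; split; auto. eapply Hv; eauto.
        -- exists [LForm (Not f); @LOm _ _ _]. split; [right; split; auto|].
           simpl. exists w. split; [apply rel_test; split; auto; apply sat_not; auto|].
           exists w'. split; auto. eapply Hom; eauto.
      * intros [u [[[E1 [E2 _]]|[_ [->| ->]]] H]]; [exfalso; tauto| |].
        -- simpl in H. destruct H as [v [H1 [v' [H2 ->]]]].
           apply rel_test in H1. destruct H1 as [<- Hnf].
           apply rel_imp in H2. destruct H2 as [C [HC [_ Hr]]].
           apply rel_imp. exists (Seq (Test (Not f)) C). split; [constructor; auto; constructor|].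
           split.
           ++ intros x y Hx Hxy. apply rel_seq in Hxy. destruct Hxy as [z [Hz _]].
              apply rel_test in Hz. destruct Hz as [_ Hz]. apply sat_not in Hz. contradiction.
           ++ apply rel_seq. exists w. split; auto. apply rel_test; auto.
        -- simpl in H. destruct H as [v [H1 [v' [H2 ->]]]].
           apply rel_test in H2. destruct H2 as [<- Hg].
           apply rel_imp in H1. destruct H1 as [C [HC [_ Hr]]].
           apply rel_imp. exists (Seq C (Test g)). split; [constructor; auto; constructor|].
           split.
           ++ intros x y Hx Hxy. apply rel_seq in Hxy. destruct Hxy as [z [_ Hz]].
              apply rel_test in Hz. destruct Hz as [-> Hz]; exact Hz.
           ++ apply rel_seq. exists v. split; auto. apply rel_test; auto.
  - rewrite rel_seq. split.
    + intros [v [H1 H2]]. apply IHA in H1. apply IHB in H2.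
      destruct H1 as [u1 [L1 R1]], H2 as [u2 [L2 R2]].
      exists (u1 ++ u2). split; [exists u1, u2; auto|]. apply wrel_app; eauto.
    + intros [u [[u1 [u2 [-> [L1 L2]]]] H]]. apply wrel_app in H.
      destruct H as [v [H1 H2]]. exists v. split; [apply IHA|apply IHB]; eauto.
  - rewrite rel_cho, IHA, IHB. split.
    + intros [[u [? ?]]|[u [? ?]]]; exists u; auto.
    + intros [u [[?|?] ?]]; [left|right]; exists u; auto.
  - rewrite rel_star. split.
    + intros [n Hn]. revert w Hn. induction n as [|n IHn]; intros w Hn; simpl in Hn.
      * subst. exists []. split; [constructor|reflexivity].
      * destruct Hn as [v [H1 H2]]. apply IHn in H2. destruct H2 as [u [Hk Hu]].
        apply IHA in H1. destruct H1 as [u1 [L1 R1]].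
        exists (u1 ++ u). split; [constructor; auto|]. apply wrel_app; eauto.
    + intros [u [Hk Hu]]. revert w Hu. induction Hk as [|u1 u2 L1 Hk IHk]; intros w Hu.
      * exists 0. exact Hu.
      * apply wrel_app in Hu. destruct Hu as [v [H1 H2]].
        destruct (IHk v H2) as [n Hn]. exists (S n). simpl. exists v. split; auto.
        apply IHA. eauto.
Qed.

End S.

Theorem mainTheorem9 (PV Idx AtP : Type) (tt : form PV Idx AtP)
  (Htt : tautology tt) (M : model PV Idx AtP) :
  (forall (A : prog PV Idx AtP) (w w' : W M),
      rel M A w w' <-> exists B, lang tt A B /\ wrel tt M B w w') /\
  (forall (u v : word PV Idx AtP), interchangeable u v ->
      forall (w w' : W M), wrel tt M u w w' <-> wrel tt M v w w').
Proof.
  split.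
  - intros A; apply part1; auto.
  - intros u v [->|[_ [_ H]]] w w'; [tauto|].
    rewrite !wrel_blocks. apply bsrel_match; auto.
Qed.
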